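(* For every $\widetilde r\in\mathbb{N}$, every $r_0\in\{0,\dots,b-1\}$ and every $d\in\mathbb{Z}$, \[\mu^{(b\widetilde r+r_0)}(d)=\frac{b-r_0}{b}\,\mu^{(\widetilde r)}(d-r_0)+\frac{r_0}{b}\,\mu^{(\widetilde r+1)}(d+b-r_0).\]
   Context: Fix an integer $b\ge2$. For $n\in\mathbb{N}$ with base-$b$ digits $n_k$, $s(n):=\sum_kn_k$. For $r,n\in\mathbb{N}$, $\Delta^{(r)}(n):=s(n+r)-s(n)$, and for $d\in\mathbb{Z}$, $\mu^{(r)}(d):=\lim_{N\to\infty}\frac1N|\{n<N:\Delta^{(r)}(n)=d\}|$ (these limits exist and define a probability measure on $\mathbb{Z}$; in particular $\mu^{(0)}=\delta_0$). *)

(* Defs.v *)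
From Stdlib Require Import Reals Lra Lia ZArith Arith List.
From Coquelicot Require Import Coquelicot.
Open Scope R_scope.

(* Base-b digit sum s(n) = sum of base-b digits of n.
   The fuel argument n suffices when b >= 2 (n / b < n for n > 0). *)
Fixpoint digsum_aux (b fuel n : nat) : nat :=
  match fuel with
  | O => O
  | S f => (n mod b + digsum_aux b f (n / b))%nat
  end.

Definition s (b n : nat) : nat := digsum_aux b n n.

Definition Delta (b r n : nat) : Z :=
  (Z.of_nat (s b (n + r)) - Z.of_nat (s b n))%Z.

Definition count_Delta (b r : nat) (d : Z) (N : nat) : nat :=
  length (filter (fun n => Z.eqb (Delta b r n) d) (seq 0 N)).

Definition mu (b r : nat) (d : Z) : R :=
  real (Lim_seq (fun N => INR (count_Delta b r d N) / INR N)).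

(* Main.v *)
Require Import Defs.
From Stdlib Require Import Reals ZArith Lra Lia Arith List.
From Coquelicot Require Import Coquelicot.
Open Scope R_scope.
Open Scope nat_scope.

Definition cnt (f : nat -> bool) (st l : nat) : nat := length (filter f (seq st l)).

Lemma cnt_app f st l1 l2 : cnt f st (l1 + l2) = (cnt f st l1 + cnt f (st + l1) l2)%nat.
Proof. unfold cnt. rewrite seq_app, filter_app, length_app. reflexivity. Qed.

Lemma cnt_const f c l : forall st, (forall k, (k < l)%nat -> f (st + k)%nat = c) ->
  cnt f st l = if c then l else 0%nat.
Proof.
  induction l as [|l IH]; intros st H.
  - destruct c; reflexivity.
  - unfold cnt. simpl. specialize (H 0%nat) as H0. rewrite Nat.add_0_r in H0.
    rewrite H0 by lia.
    assert (IH' : cnt f (S st) l = if c then l else 0%nat).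
    { apply IH. intros k Hk. replace (S st + k)%nat with (st + S k)%nat by lia. apply H. lia. }
    unfold cnt in IH'. destruct c; simpl; rewrite IH'; reflexivity.
Qed.

Lemma cnt_le f st l : (cnt f st l <= l)%nat.
Proof.
  revert st; induction l; intros st; unfold cnt; simpl. lia.
  destruct (f st); simpl; fold (cnt f (S st) l); specialize (IHl (S st)); lia.
Qed.

Lemma dig_step b f n : (2 <= b)%nat -> (n <= f)%nat ->
  digsum_aux b (S f) n = digsum_aux b f n.
Proof.
  intros hb. revert n. induction f; intros n Hn.
  - assert (n = 0%nat) by lia. subst. simpl. rewrite Nat.Div0.mod_0_l. reflexivity.
  - change (digsum_aux b (S (S f)) n) with (n mod b + digsum_aux b (S f) (n / b))%nat.
    change (digsum_aux b (S f) n) with (n mod b + digsum_aux b f (n / b))%nat.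
    rewrite IHf. reflexivity.
    destruct n. rewrite Nat.Div0.div_0_l. lia.
    assert (S n / b < S n)%nat by (apply Nat.div_lt; lia). lia.
Qed.

Lemma dig_mono b f g n : (2 <= b)%nat -> (n <= f)%nat -> (f <= g)%nat ->
  digsum_aux b g n = digsum_aux b f n.
Proof.
  intros hb Hn Hg. induction g. assert (f = 0%nat) by lia. subst; reflexivity.
  destruct (Nat.eq_dec f (S g)). subst; reflexivity.
  rewrite dig_step by lia. apply IHg. lia.
Qed.

Lemma divmod_eq b m a : (2<=b)%nat -> (a<b)%nat -> ((b*m+a) mod b = a /\ (b*m+a)/b = m)%nat.
Proof.
intros. split. rewrite Nat.add_comm, Nat.mul_comm, Nat.Div0.mod_add. apply Nat.mod_small; lia.
rewrite Nat.add_comm, Nat.mul_comm, Nat.div_add by lia. rewrite Nat.div_small by lia. lia. Qed.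

Lemma s_decomp b m a : (2 <= b)%nat -> (a < b)%nat -> s b (b*m+a) = (a + s b m)%nat.
Proof.
  intros hb ha. unfold s. destruct (divmod_eq b m a hb ha) as [E1 E2].
  destruct (b*m+a)%nat eqn:E.
  - assert (m = 0%nat) by nia. assert (a = 0%nat) by lia. clear E1 E2. subst m a. reflexivity.
  - change (digsum_aux b (S n) (S n)) with (S n mod b + digsum_aux b n (S n / b))%nat.
    rewrite E1, E2. f_equal. apply dig_mono; nia.
Qed.

Lemma Delta_lo b rt r0 m a : (2<=b)%nat -> (a<b)%nat -> (a+r0<b)%nat ->
  Defs.Delta b (b*rt+r0)%nat (b*m+a)%nat = (Z.of_nat r0 + Defs.Delta b rt m)%Z.
Proof.
  intros. unfold Defs.Delta.
  replace (b*m+a + (b*rt+r0))%nat with (b*(m+rt)+(a+r0))%nat by lia.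
  rewrite !s_decomp by lia. lia.
Qed.

Lemma Delta_hi b rt r0 m a : (2<=b)%nat -> (a<b)%nat -> (r0<b)%nat -> (b <= a+r0)%nat ->
  Defs.Delta b (b*rt+r0)%nat (b*m+a)%nat = (Z.of_nat r0 - Z.of_nat b + Defs.Delta b (rt+1)%nat m)%Z.
Proof.
  intros. unfold Defs.Delta.
  replace (b*m+a + (b*rt+r0))%nat with (b*(m+(rt+1))+(a+r0-b))%nat by lia.
  rewrite !s_decomp by lia. replace (m + (rt+1))%nat with (m + (rt + 1))%nat by lia. lia.
Qed.

Lemma count_step b r d N : count_Delta b r d (S N) =
  (count_Delta b r d N + if Z.eqb (Defs.Delta b r N) d then 1 else 0)%nat.
Proof.
  unfold count_Delta. fold (cnt (fun n => Z.eqb (Defs.Delta b r n) d) 0 (S N)).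
  fold (cnt (fun n => Z.eqb (Defs.Delta b r n) d) 0 N).
  replace (S N) with (N + 1)%nat by lia. rewrite cnt_app. f_equal.
  unfold cnt. simpl. destruct (Z.eqb _ _); reflexivity.
Qed.

Lemma count_block b rt r0 d M : (2<=b)%nat -> (r0<b)%nat ->
  count_Delta b (b*rt+r0)%nat d (b*M)%nat =
  ((b-r0) * count_Delta b rt (d - Z.of_nat r0) M
   + r0 * count_Delta b (rt+1) (d + Z.of_nat b - Z.of_nat r0) M)%nat.
Proof.
  intros hb hr. induction M.
  - rewrite !Nat.mul_0_r. reflexivity.
  - rewrite !count_step.
    unfold count_Delta at 1.
    fold (cnt (fun n => Z.eqb (Defs.Delta b (b*rt+r0) n) d) 0 (b * S M)).
    replace (b * S M)%nat with (b*M + ((b - r0) + r0))%nat by nia.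
    rewrite !cnt_app. rewrite Nat.add_0_l. unfold count_Delta in IHM. fold (cnt (fun n => Z.eqb (Defs.Delta b (b*rt+r0) n) d) 0 (b*M)) in IHM. rewrite IHM. fold (count_Delta b rt (d - Z.of_nat r0) M). fold (count_Delta b (rt+1) (d + Z.of_nat b - Z.of_nat r0) M).
    rewrite (cnt_const _ (Z.eqb (Defs.Delta b rt M) (d - Z.of_nat r0))).
    rewrite (cnt_const _ (Z.eqb (Defs.Delta b (rt+1) M) (d + Z.of_nat b - Z.of_nat r0))).
    destruct (Z.eqb (Defs.Delta b rt M) _), (Z.eqb (Defs.Delta b (rt+1) M) _); lia.
    + intros k Hk. rewrite <- Nat.add_assoc.
      rewrite Delta_hi by lia.
      destruct (Z.eqb_spec (Defs.Delta b (rt+1) M) (d + Z.of_nat b - Z.of_nat r0));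
      [apply Z.eqb_eq | apply Z.eqb_neq]; lia.
    + intros k Hk.
      rewrite Delta_lo by lia.
      destruct (Z.eqb_spec (Defs.Delta b rt M) (d - Z.of_nat r0));
      [apply Z.eqb_eq | apply Z.eqb_neq]; lia.
Qed.

Lemma count_mono b r d N k : (count_Delta b r d N <= count_Delta b r d (N+k)%nat <= count_Delta b r d N + k)%nat.
Proof.
  unfold count_Delta. fold (cnt (fun n => Z.eqb (Defs.Delta b r n) d) 0 (N+k)).
  fold (cnt (fun n => Z.eqb (Defs.Delta b r n) d) 0 N). rewrite cnt_app.
  pose proof (cnt_le (fun n => Z.eqb (Defs.Delta b r n) d) (0+N) k). lia.
Qed.

Lemma Delta0 b n : Defs.Delta b 0 n = 0%Z.
Proof. unfold Defs.Delta. rewrite Nat.add_0_r. lia. Qed.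

Lemma Delta1_le b n : (2<=b)%nat -> (Defs.Delta b 1 n <= 1)%Z.
Proof.
  intros hb. induction n as [n IH] using lt_wf_ind.
  pose proof (Nat.div_mod n b ltac:(lia)) as E. pose proof (Nat.mod_upper_bound n b ltac:(lia)).
  set (m := n / b) in *. set (a := n mod b) in *.
  replace 1%nat with (b*0+1)%nat by lia. rewrite E.
  destruct (Nat.lt_ge_cases (a+1) b).
  - rewrite Delta_lo by lia. rewrite Delta0. lia.
  - rewrite Delta_hi by lia. replace (0+1)%nat with 1%nat by lia.
    assert (m < n)%nat. { unfold m. apply Nat.div_lt; lia. }
    specialize (IH m H1). lia.
Qed.
Open Scope R_scope.

Definition u (b r : nat) (d : Z) (N : nat) : R := INR (count_Delta b r d N) / INR N.

Lemma lim_invN : is_lim_seq (fun N => INR N) p_infty -> is_lim_seq (fun N => / INR N) 0.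
Proof.
  intros H. apply (is_lim_seq_inv _ p_infty) in H. exact H. discriminate.
Qed.

Lemma lim_b_over (b : nat) : is_lim_seq (fun N => INR b * / INR N) 0.
Proof.
  pose proof (is_lim_seq_scal_l _ (INR b) _ (lim_invN is_lim_seq_INR)) as H.
  simpl in H. rewrite Rmult_0_r in H. exact H.
Qed.

Lemma divb_filter (b : nat) : (2 <= b)%nat -> filterlim (fun N => (N / b)%nat) eventually eventually.
Proof.
  intros hb P [N HP]. exists (b*N)%nat. intros n Hn. apply HP.
  apply Nat.div_le_lower_bound; lia.
Qed.

Lemma lemA (b : nat) (c : nat -> nat) (l : R) : (2 <= b)%nat ->
  (forall N k, (c N <= c (N+k) <= c N + k)%nat) -> c 0%nat = 0%nat ->
  is_lim_seq (fun M => INR (c (b*M)%nat) / INR (b*M)) l ->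
  is_lim_seq (fun N => INR (c N) / INR N) l.
Proof.
  intros hb Hc Hc0 Hv.
  set (v := fun M => INR (c (b*M)%nat) / INR (b*M)) in *.
  set (g := fun N => INR (b*(N/b)) / INR N).
  set (h := fun N => INR (c N - c (b*(N/b))%nat) / INR N).
  assert (H1 : is_lim_seq (fun N => v (N / b)%nat) l) by (apply is_lim_seq_subseq; [apply divb_filter; lia| exact Hv]).
  assert (Hq : forall N, (b*(N/b) <= N /\ N <= b*(N/b) + b)%nat).
  { intros N. pose proof (Nat.div_mod N b ltac:(lia)). pose proof (Nat.mod_upper_bound N b ltac:(lia)). lia. }
  assert (H2 : is_lim_seq g 1).
  { apply (is_lim_seq_le_le_loc (fun N => 1 - INR b * / INR N) _ (fun _ => 1)).
    - exists 1%nat. intros N HN. unfold g. destruct (Hq N) as [Q1 Q2].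
      assert (0 < INR N) by (apply lt_0_INR; lia).
      apply le_INR in Q1. apply le_INR in Q2. rewrite plus_INR in Q2.
      split.
      + replace (1 - INR b * / INR N) with ((INR N - INR b) * / INR N) by (field; lra).
        unfold Rdiv. apply Rmult_le_compat_r. left; apply Rinv_0_lt_compat; lra. lra.
      + unfold Rdiv. apply (Rmult_le_reg_r (INR N)). lra. rewrite Rmult_assoc, Rinv_l by lra. lra.
    - replace (Finite 1) with (Finite (1 - 0)) by (f_equal; ring).
      apply is_lim_seq_minus'. apply is_lim_seq_const. apply lim_b_over.
    - apply is_lim_seq_const. }
  assert (H3 : is_lim_seq h 0).
  { apply (is_lim_seq_le_le_loc (fun _ => 0) _ (fun N => INR b * / INR N)).
    - exists 1%nat. intros N HN. unfold h. destruct (Hq N) as [Q1 Q2].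
      assert (0 < INR N) by (apply lt_0_INR; lia).
      assert (HcN : (c N - c (b*(N/b)) <= b)%nat).
      { specialize (Hc (b*(N/b))%nat (N - b*(N/b))%nat).
        replace (b * (N / b) + (N - b * (N / b)))%nat with N in Hc by lia. lia. }
      apply le_INR in HcN. pose proof (pos_INR (c N - c (b*(N/b))%nat)%nat).
      unfold Rdiv. split.
      + apply Rmult_le_pos. lra. left; apply Rinv_0_lt_compat; lra.
      + apply Rmult_le_compat_r. left; apply Rinv_0_lt_compat; lra. lra.
    - apply is_lim_seq_const.
    - apply lim_b_over. }
  apply (is_lim_seq_ext (fun N => v (N/b)%nat * g N + h N)).
  - intros N. unfold v, g, h. destruct (Hq N) as [Q1 Q2].
    destruct (Nat.eq_dec (b*(N/b)) 0) as [E|E].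
    + rewrite E, Hc0. rewrite Nat.sub_0_r. simpl. unfold Rdiv. rewrite !Rmult_0_l. ring.
    + assert (HcN : (c (b*(N/b)) <= c N)%nat).
      { specialize (Hc (b*(N/b))%nat (N - b*(N/b))%nat).
        replace (b * (N / b) + (N - b * (N / b)))%nat with N in Hc by lia. lia. }
      rewrite minus_INR by exact HcN.
      assert (0 < INR (b*(N/b))) by (apply lt_0_INR; lia).
      assert (0 < INR N) by (apply lt_0_INR; lia).
      field. lra.
  - replace (Finite l) with (Finite (l * 1 + 0)) by (f_equal; ring).
    apply is_lim_seq_plus'. apply is_lim_seq_mult'; assumption. assumption.
Qed.

Lemma lemB (b r rt r0 : nat) (d : Z) (l1 m2 : R) : (2 <= b)%nat -> (r0 < b)%nat ->
  r = (b*rt + r0)%nat ->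
  is_lim_seq (u b rt (d - Z.of_nat r0)) l1 ->
  is_lim_seq (fun M => INR r0 / INR b * u b (rt+1) (d + Z.of_nat b - Z.of_nat r0) M) m2 ->
  is_lim_seq (u b r d) (INR (b - r0) / INR b * l1 + m2).
Proof.
  intros hb hr Hr H1 H2. subst r. unfold u.
  apply (lemA b (count_Delta b (b*rt+r0) d)); [assumption | intros; apply count_mono | reflexivity |].
  apply (is_lim_seq_ext (fun M => INR (b - r0) / INR b * u b rt (d - Z.of_nat r0) M +
     INR r0 / INR b * u b (rt+1) (d + Z.of_nat b - Z.of_nat r0) M)).
  - intros M. rewrite count_block by assumption. unfold u.
    destruct M.
    + assert (Z0 : forall r d, count_Delta b r d 0 = 0%nat) by reflexivity. rewrite !Z0, !Nat.mul_0_r. simpl. unfold Rdiv. rewrite !Rmult_0_l. ring.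
    + rewrite plus_INR, !mult_INR.
      assert (0 < INR b) by (apply lt_0_INR; lia).
      assert (0 < INR (S M)) by (apply lt_0_INR; lia).
      field. lra.
  - apply is_lim_seq_plus'. apply (is_lim_seq_scal_l _ _ l1 H1). exact H2.
Qed.

Lemma E0 (b : nat) (d : Z) : exists l : R, is_lim_seq (u b 0 d) l.
Proof.
  assert (Hc : forall N, count_Delta b 0 d N = if Z.eqb 0 d then N else 0%nat).
  { intros N. unfold count_Delta. fold (cnt (fun n => Z.eqb (Defs.Delta b 0 n) d) 0 N).
    apply cnt_const. intros k _. rewrite Delta0. reflexivity. }
  destruct (Z.eqb 0 d).
  - exists 1. apply (is_lim_seq_ext_loc (fun _ => 1)).
    + exists 1%nat. intros N HN. unfold u. rewrite Hc.
      assert (0 < INR N) by (apply lt_0_INR; lia). field. lra.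
    + apply is_lim_seq_const.
  - exists 0. apply (is_lim_seq_ext (fun _ => 0)).
    + intros N. unfold u. rewrite Hc. simpl. unfold Rdiv. ring.
    + apply is_lim_seq_const.
Qed.

Lemma E1 (b : nat) : (2 <= b)%nat -> forall k d, (Z.to_nat (2 - d) <= k)%nat ->
  exists l : R, is_lim_seq (u b 1 d) l.
Proof.
  intros hb k. induction k; intros d Hd.
  - assert (Hc : forall N, count_Delta b 1 d N = 0%nat).
    { intros N. unfold count_Delta. fold (cnt (fun n => Z.eqb (Defs.Delta b 1 n) d) 0 N).
      rewrite (cnt_const _ false). reflexivity. intros k _. apply Z.eqb_neq.
      pose proof (Delta1_le b (0+k) hb). lia. }
    exists 0. apply (is_lim_seq_ext (fun _ => 0)).
    + intros N. unfold u. rewrite Hc. simpl. unfold Rdiv. ring.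
    + apply is_lim_seq_const.
  - destruct (Z_le_gt_dec 2 d).
    + apply IHk. lia.
    + destruct (E0 b (d - Z.of_nat 1)) as [l1 H1].
      destruct (IHk (d + Z.of_nat b - Z.of_nat 1)%Z ltac:(lia)) as [l2 H2].
      eexists. apply (lemB b 1 0 1 d l1 (INR 1 / INR b * l2)); try lia.
      exact H1. apply (is_lim_seq_scal_l _ _ l2). replace (0+1)%nat with 1%nat by lia. exact H2.
Qed.

Lemma Eall (b : nat) : (2 <= b)%nat -> forall r d, exists l : R, is_lim_seq (u b r d) l.
Proof.
  intros hb r. induction r as [r IH] using lt_wf_ind. intros d.
  destruct r as [|[|r']].
  - apply E0.
  - apply (E1 b hb (Z.to_nat (2 - d))). lia.
  - set (r := S (S r')) in *.
    pose proof (Nat.div_mod r b ltac:(lia)) as Er. pose proof (Nat.mod_upper_bound r b ltac:(lia)).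
    set (rt := (r / b)%nat) in *. set (r0 := (r mod b)%nat) in *.
    assert ((rt < r)%nat) by (apply Nat.div_lt; unfold r; lia).
    destruct (IH rt H0 (d - Z.of_nat r0)%Z) as [l1 H1].
    destruct (Nat.eq_dec r0 0) as [Z|Z].
    + eexists. apply (lemB b r rt r0 d l1 0); try lia. exact H1.
      apply (is_lim_seq_ext (fun _ => 0)). intros M. rewrite Z. simpl. unfold Rdiv. ring.
      apply is_lim_seq_const.
    + assert ((rt + 1 < r)%nat) by (unfold r in *; nia).
      destruct (IH (rt+1)%nat H2 (d + Z.of_nat b - Z.of_nat r0)%Z) as [l2 H3].
      eexists. apply (lemB b r rt r0 d l1 (INR r0 / INR b * l2)); try lia. exact H1.
      apply (is_lim_seq_scal_l _ _ l2). exact H3.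
Qed.

Theorem mainTheorem8 (b : nat) (hb : (2 <= b)%nat)
  (rt r0 : nat) (hr0 : (r0 < b)%nat) (d : Z) :
  mu b (b * rt + r0) d =
    INR (b - r0) / INR b * mu b rt (d - Z.of_nat r0)%Z
    + INR r0 / INR b * mu b (rt + 1) (d + Z.of_nat b - Z.of_nat r0)%Z.
Proof.
  destruct (Eall b hb rt (d - Z.of_nat r0)%Z) as [l1 H1].
  destruct (Eall b hb (rt+1) (d + Z.of_nat b - Z.of_nat r0)%Z) as [l2 H2].
  pose proof (lemB b (b*rt+r0) rt r0 d l1 (INR r0 / INR b * l2) hb hr0 eq_refl H1
     (is_lim_seq_scal_l _ _ l2 H2)) as H.
  unfold mu. fold (u b (b*rt+r0) d). fold (u b rt (d - Z.of_nat r0)%Z).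
  fold (u b (rt+1) (d + Z.of_nat b - Z.of_nat r0)%Z).
  rewrite (is_lim_seq_unique _ _ H), (is_lim_seq_unique _ _ H1), (is_lim_seq_unique _ _ H2).
  reflexivity.
Qed.
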